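(* Let $K$ be a CM field with maximal totally real subfield $F$, and let $\pi\in K$ with $K=\mathbb{Q}(\pi)$ such that $\mathcal{O}_F[\pi]$ is an order of $K$. Let $\mathfrak{v}\subseteq\mathcal{O}_F$ be an ideal dividing $\mathfrak{f}^+(\mathcal{O}_F[\pi])$, and suppose $\mathfrak{v}$ is divisible by a prime power $\mathfrak{p}^k$ ($\mathfrak{p}\subseteq\mathcal{O}_F$ prime, $k\ge1$). Put $\mathfrak{f}_1^+=\mathfrak{p}^{k-1-v_{\mathfrak{p}}(\mathfrak{v})}\mathfrak{v}$ and $\mathfrak{f}_2^+=\mathfrak{p}^k$. Assume there is a relation $R$ which holds in $\mathcal{O}(\mathfrak{f}_1^+)$ but not in $\mathcal{O}(\mathfrak{f}_2^+)$. Then for every ideal $\mathfrak{f}^+\subseteq\mathcal{O}_F$ dividing $\mathfrak{v}$, we have $\mathfrak{p}^k\mid\mathfrak{f}^+$ if and only if $R$ does not hold in $\mathcal{O}(\mathfrak{f}^+)$.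
   Context: For an ideal $\mathfrak{f}^+\subseteq\mathcal{O}_F$, $\mathcal{O}(\mathfrak{f}^+)=\mathcal{O}_F+\mathfrak{f}^+\mathcal{O}_K$; this gives a bijection between ideals of $\mathcal{O}_F$ and orders of $K$ containing $\mathcal{O}_F$, whose inverse sends an order $\mathcal{O}$ to $\mathfrak{f}^+(\mathcal{O})=\mathfrak{f}\cap\mathcal{O}_F$, with $\mathfrak{f}=\{\alpha\in K:\alpha\mathcal{O}_K\subseteq\mathcal{O}\}$ the conductor ideal of $\mathcal{O}$. If $\mathcal{O}_1\subseteq\mathcal{O}_2$ are orders, the map $\mathfrak{a}\mapsto\mathfrak{a}\mathcal{O}_2$ induces a surjection $\mathrm{Cl}(\mathcal{O}_1)\to\mathrm{Cl}(\mathcal{O}_2)$ of (invertible-ideal) class groups. A relation is a tuple $(\mathfrak{a}_1,\dots,\mathfrak{a}_r)$ of invertible ideals of $\mathcal{O}_F[\pi]$; it holds in an order $\mathcal{O}\supseteq\mathcal{O}_F[\pi]$ if the product of the classes of $\mathfrak{a}_i\mathcal{O}$ is trivial in $\mathrm{Cl}(\mathcal{O})$. $v_{\mathfrak{p}}$ denotes the $\mathfrak{p}$-adic valuation. *)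

(* Defs.v *)
(* Number fields are modelled as L : fieldExtType rat;
   subsets of L (ideals, orders, fractional ideals) as predicates L -> Prop. *)
From HB Require Import structures.
From mathcomp Require Import all_boot all_order all_algebra all_field.
Set Implicit Arguments. Unset Strict Implicit. Unset Printing Implicit Defensive.
Import GRing.Theory Num.Theory.
Local Open Scope ring_scope.

Section Defs.
Variable L : fieldExtType rat.

Definition lset := L -> Prop.

Definition seteq (A B : lset) := forall x, A x <-> B x.

Definition addS (A B : lset) : lset :=
  fun x => exists a b, A a /\ B b /\ x = a + b.
Definition mulS (A B : lset) : lset :=
  fun x => exists s : seq (L * L),
    (forall ab, ab \in s -> A ab.1 /\ B ab.2) /\ x = \sum_(ab <- s) ab.1 * ab.2.

Definition is_integral (x : L) :=
  exists q : {poly int}, q \is monic /\ root (map_poly (fun z : int => z%:~R) q) x.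

Definition OKset : lset := is_integral.
Definition OF (F : {vspace L}) : lset := fun x => x \in F /\ is_integral x.

(* a subfield E is totally real if every embedding of L (equivalently of E)
   into the complex numbers maps E into the reals *)
Definition totally_real (E : {vspace L}) :=
  forall s : {rmorphism L -> algC}, forall x, x \in E -> s x \is Num.real.
Definition totally_imaginary :=
  forall s : {rmorphism L -> algC}, exists x, s x \isn't Num.real.

(* L is a CM field (a totally imaginary quadratic extension of the totally real
   field F) and F is its maximal totally real subfield *)
Definition CM_with_max_real (F : {subfield L}) :=
  [/\ totally_real F, totally_imaginary,
      \dim (fullv : {vspace L}) = (2 * \dim F)%N
    & forall E : {subfield L}, totally_real E -> (E <= F)%VS].

Definition is_subring (O : lset) :=
  [/\ O 1, (forall x y, O x -> O y -> O (x - y)) & (forall x y, O x -> O y -> O (x * y))].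

Definition is_order (O : lset) :=
  is_subring O /\
  exists s : seq L,
    (forall x, O x <-> exists c : seq int,
        size c = size s /\ x = \sum_(i < size s) (c`_i)%:~R * s`_i)
    /\ (<<s>>%VS = fullv).

Definition is_module (O A : lset) :=
  [/\ A 0, (forall x y, A x -> A y -> A (x + y)) & (forall r x, O r -> A x -> A (r * x))].

Definition is_ideal (O A : lset) := (forall x, A x -> O x) /\ is_module O A.

Definition is_prime (O P : lset) :=
  [/\ is_ideal O P, ~ P 1 & forall x y, O x -> O y -> P (x * y) -> P x \/ P y].

Definition divI (O A B : lset) := exists C, is_ideal O C /\ seteq B (mulS A C).

Fixpoint powS (O A : lset) (n : nat) : lset :=
  match n with 0 => O | n'.+1 => mulS A (powS O A n') end.

Definition invS (E : {vspace L}) (O A : lset) : lset :=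
  fun x => x \in E /\ forall y, A y -> O (x * y).

Definition powZ (E : {vspace L}) (O A : lset) (z : int) : lset :=
  match z with
  | Posz n => powS O A n
  | Negz n => powS O (invS E O A) n.+1
  end.

Definition pval (O P A : lset) (e : nat) :=
  divI O (powS O P e) A /\ ~ divI O (powS O P e.+1) A.

Definition OFpi (F : {vspace L}) (pi : L) : lset :=
  fun x => exists s : seq L, (forall c, c \in s -> OF F c) /\
                             x = \sum_(i < size s) s`_i * pi ^+ i.

(* f^+(O) = f ∩ O_F, f = conductor of O *)
Definition condplus (F : {vspace L}) (O : lset) : lset :=
  fun x => OF F x /\ forall y, OKset y -> O (x * y).

Definition Ord (F : {vspace L}) (f : lset) : lset := addS (OF F) (mulS f OKset).

Definition inv_ideal (O A : lset) :=
  [/\ is_module O A, (exists x, A x /\ x != 0)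
    & exists B, is_module O B /\ seteq (mulS A B) O].

(* the relation R = (a_1,...,a_r) holds in O: prod_i (a_i O) is principal *)
Definition rel_holds (O : lset) (R : seq lset) :=
  exists x, x != 0 /\
    seteq (foldr mulS O [seq mulS a O | a <- R]) (fun y => exists z, O z /\ y = x * z).

End Defs.

(* Main.v *)
Require Import Defs.
From HB Require Import structures.
From mathcomp Require Import all_boot all_order all_algebra all_field.
From mathcomp Require Import zify ring.
Import GRing.Theory Num.Theory.
Local Open Scope ring_scope.
Set Implicit Arguments. Unset Strict Implicit.

Section SetAlg.
Variable L : fieldExtType rat.
Implicit Types A B C D O : lset L.

Definition subS A B := forall x, A x -> B x.
Definition addcl A := A 0 /\ forall x y, A x -> A y -> A (x + y).

Lemma seteq_refl A : seteq A A. Proof. by []. Qed.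
Lemma seteq_sym A B : seteq A B -> seteq B A. Proof. by move=> h x; split=> /h. Qed.
Lemma seteq_trans A B C : seteq A B -> seteq B C -> seteq A C.
Proof. by move=> h1 h2 x; split=> [/h1/h2|/h2/h1]. Qed.
Lemma seteq_sub A B : seteq A B -> subS A B. Proof. by move=> h x /h. Qed.
Lemma sub_seteq A B : subS A B -> subS B A -> seteq A B.
Proof. by move=> h1 h2 x; split=> [/h1|/h2]. Qed.

Lemma mulS_in A B a b : A a -> B b -> mulS A B (a * b).
Proof.
move=> ha hb; exists [:: (a, b)]; split; last by rewrite big_seq1.
by move=> ab; rewrite inE => /eqP ->.
Qed.

Lemma mulS_addcl A B : addcl (mulS A B).
Proof.
split; first by exists [::]; split=> //; rewrite big_nil.
move=> x y [s [hs ->]] [t [ht ->]]; exists (s ++ t); split; last by rewrite big_cat.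
by move=> ab; rewrite mem_cat => /orP [/hs|/ht].
Qed.

Lemma mulS_min A B S : addcl S -> (forall a b, A a -> B b -> S (a * b)) ->
  subS (mulS A B) S.
Proof.
move=> [S0 SD] hab x [s [hs ->]]; elim: s hs => [|ab s IH] hs; first by rewrite big_nil.
rewrite big_cons; apply: SD; last by apply: IH => c hc; apply: hs; rewrite inE hc orbT.
by have [] := hs ab (mem_head _ _); apply: hab.
Qed.

Lemma mulS_mono A A' B B' : subS A A' -> subS B B' -> subS (mulS A B) (mulS A' B').
Proof.
move=> hA hB; apply: mulS_min; first exact: mulS_addcl.
by move=> a b /hA ha /hB hb; apply: mulS_in.
Qed.

Lemma mulS_congr A A' B B' : seteq A A' -> seteq B B' -> seteq (mulS A B) (mulS A' B').
Proof.
move=> h1 h2; apply: sub_seteq; apply: mulS_mono;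
  by [apply: seteq_sub | apply: seteq_sub; apply: seteq_sym].
Qed.

Lemma mulS_subC A B : subS (mulS A B) (mulS B A).
Proof.
apply: mulS_min; first exact: mulS_addcl.
by move=> a b ha hb; rewrite mulrC; apply: mulS_in.
Qed.

Lemma mulSC A B : seteq (mulS A B) (mulS B A).
Proof. by apply: sub_seteq; apply: mulS_subC. Qed.

Lemma mulS_subA A B C : subS (mulS A (mulS B C)) (mulS (mulS A B) C).
Proof.
apply: mulS_min; first exact: mulS_addcl.
move=> a m ha; apply: (@mulS_min B C (fun m => mulS (mulS A B) C (a * m))).
  split; first by rewrite mulr0; apply: (mulS_addcl _ _).1.
  by move=> x y h1 h2; rewrite mulrDr; apply: (mulS_addcl _ _).2.
by move=> b c hb hc; rewrite mulrA; apply: mulS_in=> //; apply: mulS_in.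
Qed.

Lemma mulSA A B C : seteq (mulS A (mulS B C)) (mulS (mulS A B) C).
Proof.
apply: sub_seteq; first exact: mulS_subA.
move=> x /mulS_subC /mulS_subA /mulS_subC /mulS_subA /mulS_subC; done.
Qed.

Lemma subring0 O : is_subring O -> O 0.
Proof. by case=> h1 hB _; rewrite -(subrr 1); apply: hB. Qed.
Lemma subringN O x : is_subring O -> O x -> O (- x).
Proof. move=> hO hx; case: (hO)=> _ hB _; rewrite -sub0r; apply: hB=> //; exact: subring0. Qed.
Lemma subringD O x y : is_subring O -> O x -> O y -> O (x + y).
Proof. move=> hO hx hy; case: (hO)=> _ hB _; rewrite -(opprK y); apply: hB=> //; exact: subringN. Qed.
Lemma subring_addcl O : is_subring O -> addcl O.
Proof. by move=> hO; split; [apply: subring0 | move=> x y; apply: subringD]. Qed.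
Lemma subringM O x y : is_subring O -> O x -> O y -> O (x * y).
Proof. by case=> _ _ hM; apply: hM. Qed.
Lemma subring1 O : is_subring O -> O 1. Proof. by case. Qed.

Lemma module_addcl O A : is_module O A -> addcl A.
Proof. by case=> h0 hD _; split. Qed.

Lemma mulS_modO O A : is_subring O -> is_module O A -> seteq (mulS A O) A.
Proof.
move=> hO hA; apply: sub_seteq.
  apply: mulS_min; first exact: module_addcl hA.
  by move=> a r ha hr; rewrite mulrC; case: hA=> _ _; apply.
by move=> x hx; rewrite -[x]mulr1; apply: mulS_in=> //; apply: subring1.
Qed.

Lemma mulS_Omod O A : is_subring O -> is_module O A -> seteq (mulS O A) A.
Proof. by move=> hO hA; apply: seteq_trans (mulSC _ _) (mulS_modO hO hA). Qed.

Lemma mulS_module O A B : is_subring O -> is_module O B -> is_module O (mulS A B).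
Proof.
move=> hO hB; split; [exact: (mulS_addcl _ _).1 | exact: (mulS_addcl _ _).2 |].
move=> r x hr; apply: (@mulS_min A B (fun x => mulS A B (r * x))).
  split; first by rewrite mulr0; apply: (mulS_addcl _ _).1.
  by move=> y z h1 h2; rewrite mulrDr; apply: (mulS_addcl _ _).2.
by move=> a b ha hb; rewrite mulrCA; apply: mulS_in=> //; case: hB=> _ _; apply.
Qed.

Lemma mulS_sub_l O A B : is_module O A -> subS B O -> subS (mulS A B) A.
Proof.
move=> hA hB; apply: mulS_min; first exact: module_addcl hA.
by move=> a b ha hb; rewrite mulrC; case: hA=> _ _; apply=> //; apply: hB.
Qed.

Lemma ideal_mulS O A B : is_subring O -> is_ideal O A -> is_ideal O B -> is_ideal O (mulS A B).
Proof.
move=> hO [hAO hA] [hBO hB]; split; last exact: mulS_module.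
by move=> x /(mulS_sub_l hA hBO) /hAO.
Qed.

Lemma powS_ideal O P n : is_subring O -> is_ideal O P -> is_ideal O (powS O P n).
Proof.
move=> hO hP; elim: n => [|n IH] /=.
  split=> //; split; [exact: subring0 | move=> ??; exact: subringD | move=> ??; exact: subringM].
exact: ideal_mulS.
Qed.

Lemma divI_sub O A B : is_subring O -> is_module O A -> divI O A B -> subS B A.
Proof. by move=> hO hA [C [[hCO _] hB]] x /hB; apply: mulS_sub_l hA hCO x. Qed.

End SetAlg.
Section Integral.
Variable L : fieldExtType rat.

Definition zsp (g : seq L) (x : L) :=
  exists c : nat -> int, x = \sum_(i < size g) (c i)%:~R * g`_i.

Lemma DT (g : seq L) (x : L) :
  (exists i, (i < size g)%N /\ g`_i != 0) ->
  (forall i, (i < size g)%N -> zsp g (x * g`_i)) -> is_integral x.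
Proof.
move=> [i0 [hi0 gi0]] hst.
set n := size g in hi0 hst *.
have : forall i : 'I_n, exists c : nat -> int,
    x * g`_i = \sum_(j < n) (c j)%:~R * g`_j by move=> i; apply: hst.
case/fin_all_exists => C hC.
pose A : 'M[int]_n := \matrix_(i, j) C i j.
exists (char_poly A); split; first exact: char_poly_monic.
rewrite /root.
have -> : map_poly (fun z : int => z%:~R) (char_poly A) = map_poly (intr : int -> L) (char_poly A) by [].
rewrite (map_char_poly (intr : {rmorphism int -> L})).
set B := map_mx _ A.
rewrite /char_poly -horner_evalE -det_map_mx.
set M := map_mx _ _.
have hM : M = x%:M - B.
  apply/matrixP=> i j; rewrite /M /char_poly_mx.
  rewrite !mxE.
  by rewrite /= horner_evalE hornerD hornerN hornerMn hornerX hornerC.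
pose G : 'cV[L]_n := \col_i g`_i.
have hMG : M *m G = 0.
  rewrite hM mulmxBl mul_scalar_mx; apply/matrixP=> i j.
  rewrite !mxE (ord1 j) /= hC; apply/eqP; rewrite subr_eq0; apply/eqP.
  by apply: eq_bigr=> k _; rewrite !mxE.
have : \adj M *m (M *m G) = 0 by rewrite hMG mulmx0.
rewrite mulmxA mul_adj_mx mul_scalar_mx => /matrixP /(_ (Ordinal hi0) 0).
rewrite !mxE => /eqP; rewrite mulf_eq0 (negbTE gi0) orbF => /eqP ->.
done.
Qed.


Definition zcl (S : lset L) :=
  [/\ S 0, (forall x y, S x -> S y -> S (x + y)) & (forall x, S x -> S (- x))].
Definition zspI (g : seq L) (x : L) :=
  forall S, zcl S -> (forall y, y \in g -> S y) -> S x.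

Lemma zcl_z S x z : zcl S -> S x -> S (x *~ z).
Proof.
case=> h0 hD hN hx; case: z => n.
  by rewrite -pmulrn; elim: n => [|n IH]; rewrite ?mulr0n // mulrS; apply: hD.
rewrite NegzE mulrNz -pmulrn; apply: hN; elim: n => [|n IH]; first by rewrite mulr1n.
by rewrite mulrS; apply: hD.
Qed.

Lemma zcl_sum S (I : Type) (r : seq I) (P : pred I) (f : I -> L) :
  zcl S -> (forall i, P i -> S (f i)) -> S (\sum_(i <- r | P i) f i).
Proof. by move=> [h0 hD _] hf; apply: big_ind => //. Qed.

Lemma zsp_zspI g x : zsp g x -> zspI g x.
Proof.
move=> [c ->] S hS hg; apply: zcl_sum => // i _.
by rewrite mulrzl; apply: zcl_z => //; apply: hg; apply: mem_nth.
Qed.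

Lemma zsp_zcl g : zcl (zsp g).
Proof.
split.
- by exists (fun _ => 0); rewrite big1 // => i _; rewrite mul0r.
- move=> x y [c ->] [d ->]; exists (fun i => c i + d i); rewrite -big_split /=.
  by apply: eq_bigr=> i _; rewrite rmorphD mulrDl.
- move=> x [c ->]; exists (fun i => - c i); rewrite -sumrN.
  by apply: eq_bigr=> i _; rewrite rmorphN mulNr.
Qed.

Lemma zsp_mem g y : y \in g -> zsp g y.
Proof.
move=> hy; set k := index y g; have hk : (k < size g)%N by rewrite index_mem.
exists (fun j => (j == k)%:Z); rewrite (bigD1 (Ordinal hk)) //= eqxx mul1r.
rewrite big1 ?addr0 ?nth_index // => i hi.
have -> : (nat_of_ord i == k) = false.
  by apply/negbTE; move: hi; apply: contra => /eqP h; apply/eqP/val_inj.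
by rewrite mul0r.
Qed.

Lemma zspI_zsp g x : zspI g x -> zsp g x.
Proof. by move=> h; apply: h; [apply: zsp_zcl | apply: zsp_mem]. Qed.

Lemma zspI_zcl g : zcl (zspI g).
Proof.
split.
- by move=> S [] .
- by move=> x y hx hy S hS hg; case: (hS) => _ hD _; apply: hD; [apply: hx | apply: hy].
- by move=> x hx S hS hg; case: (hS) => _ _ hN; apply: hN; apply: hx.
Qed.

Lemma zspI_mem g y : y \in g -> zspI g y. Proof. by move=> hy S _; apply. Qed.

Lemma zspI_sub g h x : (forall y, y \in g -> zspI h y) -> zspI g x -> zspI h x.
Proof. by move=> hgh hx; apply: hx; [apply: zspI_zcl | ]. Qed.

Lemma zspI_mul g1 g2 u w : zspI g1 u -> zspI g2 w ->
  zspI [seq x * y | x <- g1, y <- g2] (u * w).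
Proof.
set gp := [seq _ | x <- g1, y <- g2].
move=> hu; move: w; apply: (hu (fun u => forall w, zspI g2 w -> zspI gp (u * w))).
- split.
  + by move=> w _; rewrite mul0r; case: (zspI_zcl gp).
  + by move=> x y hx hy w hw; rewrite mulrDl; case: (zspI_zcl gp) => _ hD _; apply: hD; [apply: hx|apply: hy].
  + by move=> x hx w hw; rewrite mulNr; case: (zspI_zcl gp) => _ _ hN; apply: hN; apply: hx.
move=> y hy w hw; apply: (hw (fun w => zspI gp (y * w))).
- split.
  + by rewrite mulr0; case: (zspI_zcl gp).
  + by move=> x z hx hz; rewrite mulrDr; case: (zspI_zcl gp) => _ hD _; apply: hD.
  + by move=> x hx; rewrite mulrN; case: (zspI_zcl gp) => _ _ hN; apply: hN.
by move=> z hz; apply: zspI_mem; apply: allpairs_f.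
Qed.

Lemma integral_pow (a : L) : is_integral a -> exists m, (0 < m)%N /\
  forall i, zspI (mkseq (fun k => a ^+ k) m) (a ^+ i).
Proof.
move=> [P [mP rP]].
have hs : size (map_poly (fun z : int => z%:~R) P : {poly L}) = size P.
  by apply: size_map_poly_id0; rewrite (monicP mP) rmorph1 oner_neq0.
set m := (size P).-1.
have sP : size P = m.+1.
  rewrite /m prednK // lt0n size_poly_eq0; apply: contraTneq mP => ->.
  by rewrite monicE lead_coef0 eq_sym oner_eq0.
have lP : P`_m = 1 by move: (monicP mP); rewrite lead_coefE sP.
have ham : a ^+ m = - \sum_(k < m) (P`_k)%:~R * a ^+ k.
  move: rP; rewrite /root horner_coef hs sP big_ord_recr /= coef_map /= lP rmorph1 mul1r.
  rewrite addrC addr_eq0 => /eqP ->; congr (- _).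
  by apply: eq_bigr => i _; rewrite coef_map.
have m0 : (0 < m)%N.
  rewrite lt0n; apply/negP => /eqP m0; move: ham; rewrite m0 big_ord0 expr0 oppr0.
  by move/eqP; rewrite oner_eq0.
exists m; split=> // i; elim: i {-2}i (leqnn i) => [|i IH] j hj.
  rewrite leqn0 in hj; rewrite (eqP hj); apply: zspI_mem.
  by apply/mapP; exists 0%N; rewrite ?mem_iota.
case: (ltnP j m) => hjm.
  by apply: zspI_mem; apply/mapP; exists j; rewrite ?mem_iota.
rewrite -(subnK hjm) exprD ham mulrN mulr_sumr.
case: (zspI_zcl (mkseq (fun k => a ^+ k) m)) => _ _ hN; apply: hN.
apply: zcl_sum; first exact: zspI_zcl.
move=> k _; rewrite mulrCA -exprD mulrzl.
apply: (@zcl_z (zspI (mkseq (fun k => a ^+ k) m))); first exact: zspI_zcl.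
apply: IH; rewrite -ltnS; apply: leq_trans hj.
by rewrite -{2}(subnK hjm) ltn_add2l.
Qed.

Lemma integral_ring (a b : L) : is_integral a -> is_integral b ->
  is_integral (a + b) /\ is_integral (a - b) /\ is_integral (a * b).
Proof.
move=> /integral_pow [m [m0 hm]] /integral_pow [n [n0 hn]].
set ga := mkseq (fun k => a ^+ k) m in hm *; set gb := mkseq (fun k => b ^+ k) n in hn *.
set g := [seq x * y | x <- ga, y <- gb].
have hab i j : zspI g (a ^+ i * b ^+ j) by apply: zspI_mul.
have hg y : y \in g -> exists i j, y = a ^+ i * b ^+ j.
  case/allpairsP => -[x z] /= [/mapP [i _ ->] /mapP [j _ ->] ->]; by exists i, j.
have hne : exists i, (i < size g)%N /\ g`_i != 0.
  exists 0%N; rewrite size_allpairs !size_mkseq muln_gt0 m0 n0; split=> //.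
  rewrite /g /ga /gb; case: m m0 {hm ga g hab hg} => // m _; case: n n0 {hn gb} => // n _.
  by rewrite /= !expr0 mulr1 oner_neq0.
have key y : (forall i j, zspI g (y * (a ^+ i * b ^+ j))) -> is_integral y.
  move=> hy; apply: (DT hne) => k hk; apply: zspI_zsp.
  by have [i [j ->]] := hg _ (mem_nth 0 hk); apply: hy.
have hA i j : zspI g (a * (a ^+ i * b ^+ j)) by rewrite mulrA -exprS.
have hB i j : zspI g (b * (a ^+ i * b ^+ j)) by rewrite mulrCA -exprS.
case: (zspI_zcl g) => _ hD hN.
split; [|split]; apply: key => i j.
- by rewrite mulrDl; apply: hD.
- by rewrite mulrBl; apply: hD => //; apply: hN.
- by rewrite mulrACA -!exprS; apply: hab.
Qed.

End Integral.

From Stdlib Require Import Classical ClassicalEpsilon.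

Lemma ex_minP (P : nat -> Prop) : (exists n, P n) ->
  exists n, P n /\ forall m, P m -> (n <= m)%N.
Proof.
move=> [n Pn]; elim: n {-2}n (leqnn n) Pn => [|n IH] k hk Pk.
  by exists k; split=> // m _; rewrite leqn0 in hk; rewrite (eqP hk).
case: (classic (exists m, (m < k)%N /\ P m)) => [[m [hm Pm]]|nex].
  by apply: (IH m) => //; rewrite -ltnS; apply: leq_trans hk.
exists k; split=> // m Pm; rewrite leqNgt; apply/negP => hm; apply: nex; by exists m.
Qed.

Lemma int_principal (I : int -> Prop) : I 0 -> (forall x y, I x -> I y -> I (x + y)) ->
  (forall q x, I x -> I (q * x)) -> exists d, I d /\ forall z, I z -> (d %| z)%Z.
Proof.
move=> I0 ID IM.
case: (classic (exists z, I z /\ z != 0)) => [[z [Iz z0]]|nz]; last first.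
  exists 0; split=> // z Iz; rewrite dvd0z; apply/eqP; apply: NNPP => h; apply: nz.
  by exists z; split=> //; apply/eqP.
pose P n := (0 < n)%N /\ exists w, I w /\ `|w|%N = n.
have [n [[n0 [w [Iw hw]]] nmin]] : exists n, P n /\ forall m, P m -> (n <= m)%N.
  apply: ex_minP; exists `|z|%N; split; last by exists z.
  by rewrite absz_gt0.
have Id : I (Posz n).
  case: (lerP 0 w) => hw0.
    by have -> : Posz n = w by rewrite -hw gez0_abs.
  have -> : Posz n = (-1) * w by rewrite -hw ltz0_abs // mulN1r.
  by apply: IM.
exists (Posz n); split=> // y Iy; apply/dvdz_mod0P.
set q := (y %/ n)%Z; set r := (y %% n)%Z.
have e : y = q * n + r by apply: divz_eq.
have Ir : I r.
  have -> : r = y + (- q) * n by rewrite e mulNr addrC addrA addNr add0r.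
  by apply: ID => //; apply: IM.
have r0 : 0 <= r by apply: modz_ge0; rewrite eqz_nat -lt0n.
have rn : r < Posz n by apply: ltz_pmod; rewrite ltz_nat.
apply/eqP; apply: contraT => rnz.
have h : (n <= `|r|)%N by apply: (nmin `|r|%N); split; [rewrite absz_gt0 | exists r].
move: rn; rewrite -(gez0_abs r0) ltz_nat; rewrite ltnNge h //.
Qed.

Section FG.
Variable L : fieldExtType rat.

Definition isZ (q : rat) := exists z : int, q = z%:~R.

Lemma common_den (qs : seq rat) : exists N : int, N != 0 /\
  forall q, q \in qs -> isZ (N%:~R * q).
Proof.
elim: qs => [|q qs [N [N0 hN]]]; first by exists 1; split.
exists (N * denq q); split; first by rewrite mulf_neq0 ?denq_neq0.
move=> q'; rewrite inE => /orP [/eqP ->|hq'].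
  exists (N * numq q); rewrite !rmorphM /=.
  by rewrite numqE -mulrA [_ * q]mulrC.
have [z hz] := hN q' hq'; exists (denq q * z).
by rewrite !rmorphM /= -hz mulrAC mulrC.
Qed.

Lemma isZ_sum (I : Type) (r : seq I) (f : I -> rat) :
  (forall i, isZ (f i)) -> isZ (\sum_(i <- r) f i).
Proof.
move=> hf; elim: r => [|i r [z hz]]; first by exists 0; rewrite big_nil.
have [w hw] := hf i; by exists (w + z); rewrite big_cons hz hw rmorphD.
Qed.

Lemma FG (s : seq L) (M : lset L) : zcl M -> (forall x, M x -> zsp s x) ->
  exists g, forall x, M x <-> zspI g x.
Proof.
move=> hM hMs.
set n := \dim (fullv : {vspace L}).
pose crd (i : 'I_n) (x : L) : rat := coord (vbasis fullv) i x.
have [N [N0 hN]] := common_den [seq crd i s`_j | i <- enum 'I_n, j <- iota 0 (size s)].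
have hNM i x : M x -> isZ (N%:~R * crd i x).
  move=> /hMs [c ->]; rewrite /crd linear_sum mulr_sumr /=.
  apply: isZ_sum => j; rewrite [(c j)%:~R * _]mulrzl raddfMz mulrzAr.
  have [z hz] : isZ (N%:~R * crd i s`_j).
    apply: hN; apply: (allpairs_f (fun i j => crd i s`_j)); first by rewrite mem_enum.
    by rewrite mem_iota add0n ltn_ord.
  by exists (z * c j); rewrite /crd in hz; rewrite hz rmorphM /= mulrzr.
pose Mj (j : nat) x := M x /\ forall i : 'I_n, (j <= i)%N -> crd i x = 0.
case: (hM) => hM0 hMD hMN.
have hMj j : zcl (Mj j).
  split.
  - by split=> // i _; rewrite /crd raddf0.
  - move=> x y [Mx hx] [My hy]; split; first by apply: hMD.
    by move=> i hi; rewrite /crd raddfD /= -!/(crd _ _) hx ?hy ?addr0.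
  - move=> x [Mx hx]; split; first by apply: hMN.
    by move=> i hi; rewrite /crd raddfN /= -!/(crd _ _) hx ?oppr0.
have main : forall j, (j <= n)%N -> exists g, forall x, Mj j x <-> zspI g x.
  elim => [|j IH] hj.
    exists [::] => x; split.
      move=> [Mx hx]; have -> : x = 0.
        rewrite (coord_vbasis (memvf x)) big1 // => i _.
        by have := hx i (leq0n _); rewrite /crd => ->; rewrite scale0r.
      by case: (zspI_zcl (L:=L) [::]).
    move=> h; have -> : x = 0.
      apply: (h (fun y : L => y = 0)); last by [].
      split=> //.
      + by move=> ?? -> ->; rewrite addr0.
      + by move=> ? ->; rewrite oppr0.
    by case: (hMj 0%N).
  pose jj := Ordinal hj.
  have [g hg] := IH (ltnW hj).
  pose I z := exists x, Mj j.+1 x /\ N%:~R * crd jj x = z%:~R.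
  have [d [[x0 [Mx0 hx0]] hd]] : exists d, I d /\ forall z, I z -> (d %| z)%Z.
    apply: int_principal.
    - by exists 0; split; [case: (hMj j.+1) | rewrite /crd raddf0 mulr0].
    - move=> z1 z2 [x1 [M1 h1]] [x2 [M2 h2]]; exists (x1 + x2); split.
        by case: (hMj j.+1) => _ hD _; apply: hD.
      by rewrite /crd raddfD /= mulrDr -!/(crd _ _) h1 h2 rmorphD.
    - move=> q z [x1 [M1 h1]]; exists (x1 *~ q); split; first exact: zcl_z.
      by rewrite /crd raddfMz mulrzAr -/(crd _ _) h1 rmorphM /= mulrC mulrzr.
  exists (x0 :: g) => x; split.
    move=> Mx; have [z hz] := hNM jj x Mx.1.
    have [q hq] : exists q, z = q * d by apply/dvdzP; apply: hd; exists x.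
    set y := x - x0 *~ q.
    have My : Mj j y.
      split; first by apply: hMD; [exact: Mx.1 | apply: hMN; apply: (zcl_z _ hM); exact: Mx0.1].
      move=> i; rewrite leq_eqVlt => /orP [/eqP ij|ji].
        have -> : i = jj by apply: val_inj.
        suff : N%:~R * crd jj y == 0 by rewrite mulf_eq0 intr_eq0 (negbTE N0) => /eqP.
        rewrite /y /crd raddfB raddfMz /= mulrBr mulrzAr -!/(crd _ _) hz hx0 hq.
        by rewrite rmorphM /= mulrC mulrzr subrr.
      by rewrite /y /crd raddfB raddfMz /= -!/(crd _ _) Mx.2 // Mx0.2 // mul0rz subrr.
    have -> : x = y + x0 *~ q by rewrite /y subrK.
    case: (zspI_zcl (x0 :: g)) => _ hD _; apply: hD.
      apply: (zspI_sub (g := g)); last by apply/hg.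
      by move=> w hw; apply: zspI_mem; rewrite inE hw orbT.
    by apply: (zcl_z _ (zspI_zcl _)); apply: zspI_mem; rewrite mem_head.
  move=> h; apply: h; first exact: hMj.
  move=> w; rewrite inE => /orP [/eqP -> | /zspI_mem /hg [Mw hw]]; first exact: Mx0.
  by split=> // i hi; apply: hw; apply: ltnW.
have [g hg] := main n (leqnn n).
exists g => x; rewrite -hg; split; last by case.
by move=> Mx; split=> // i; rewrite leqNgt ltn_ord.
Qed.
End FG.

Section OFsec.
Variable L : fieldExtType rat.
Variable F : {subfield L}.
Local Notation OFF := (OF (F : {vspace L})).

Lemma int_integral (z : int) : is_integral (z%:~R : L).
Proof.
exists ('X - z%:P); split; first exact: monicXsubC.
by rewrite /root rmorphB /= map_polyX map_polyC /= hornerXsubC subrr.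
Qed.

Lemma OF_subring : is_subring OFF.
Proof.
split.
- by split; [exact: mem1v | exact: (int_integral 1)].
- by move=> x y [hx ix] [hy iy]; split; [rewrite rpredB | case: (integral_ring ix iy) => _ []].
- by move=> x y [hx ix] [hy iy]; split; [rewrite rpredM | case: (integral_ring ix iy) => _ []].
Qed.

Lemma OK_subring : is_subring (@OKset L).
Proof.
split.
- exact: (int_integral 1).
- by move=> x y ix iy; case: (integral_ring ix iy) => _ [].
- by move=> x y ix iy; case: (integral_ring ix iy) => _ [].
Qed.

Lemma subring_zcl (O : lset L) : is_subring O -> zcl O.
Proof.
move=> hO; split; [exact: subring0 | move=> ??; exact: subringD | move=> ?; exact: subringN].
Qed.

Lemma subring_int (O : lset L) (z : int) : is_subring O -> O z%:~R.
Proof. by move=> hO; apply: (zcl_z _ (subring_zcl hO)); apply: subring1. Qed.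

Lemma subring_ev (O : lset L) (P : {poly int}) a : is_subring O -> O a ->
  O ((map_poly (fun z : int => z%:~R) P).[a]).
Proof.
move=> hO ha; rewrite horner_coef; apply: zcl_sum; first exact: subring_zcl.
move=> i _; rewrite coef_map /=; apply: subringM=> //; first exact: subring_int.
elim: (nat_of_ord i) => [|k IH]; first by rewrite expr0; apply: subring1.
by rewrite exprS; apply: subringM.
Qed.

Lemma ev_split (P : {poly int}) (a : L) :
  (map_poly (fun z : int => z%:~R) P).[a] =
  (P`_0)%:~R + (map_poly (fun z : int => z%:~R) (drop_poly 1 P)).[a] * a.
Proof.
have eP : P = (P`_0)%:P + drop_poly 1 P * 'X.
  rewrite -[in LHS](poly_take_drop 1 P) expr1; congr (_ + _).
  by apply/polyP => i; rewrite coef_take_poly coefC; case: i.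
rewrite {1}eP.
rewrite (rmorphD (map_poly (intr : int -> L))) (rmorphM (map_poly (intr : int -> L))) /=.
by rewrite map_polyC map_polyX /= hornerD hornerC hornerMX.
Qed.


Lemma intrL_eq0 (z : int) : ((z%:~R : L) == 0) = (z == 0).
Proof. by rewrite -(rmorph_int (in_alg L)) fmorph_eq0 intr_eq0. Qed.

Lemma natrL_eq0 (n : nat) : ((n%:R : L) == 0) = (n == 0%N).
Proof. by have := intrL_eq0 n. Qed.

Section Prime.
Variable p : lset L.
Hypothesis hp : is_prime OFF p.

Lemma pOF x : p x -> OFF x. Proof. by case: hp => -[h _] _ _; apply: h. Qed.
Lemma p_mod : is_module OFF p. Proof. by case: hp => -[]. Qed.
Lemma p0 : p 0. Proof. by case: p_mod. Qed.
Lemma pD x y : p x -> p y -> p (x + y). Proof. by case: p_mod => _ h _; apply: h. Qed.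
Lemma pM r x : OFF r -> p x -> p (r * x). Proof. by case: p_mod => _ _ h; apply: h. Qed.
Lemma pN x : p x -> p (- x).
Proof. by move=> hx; rewrite -mulN1r; apply: pM=> //; apply: subringN OF_subring (subring1 OF_subring). Qed.
Lemma pB x y : p x -> p y -> p (x - y). Proof. by move=> hx hy; apply: pD=> //; apply: pN. Qed.
Lemma p_zcl : zcl p. Proof. by split; [exact: p0 | exact: pD | exact: pN]. Qed.
Lemma pint x (z : int) : p x -> p (z%:~R * x).
Proof. by move=> hx; apply: pM=> //; apply: subring_int OF_subring. Qed.
Lemma p_prime x y : OFF x -> OFF y -> p (x * y) -> p x \/ p y.
Proof. by case: hp => _ _; apply. Qed.
Lemma p_not1 : ~ p 1. Proof. by case: hp. Qed.

Lemma prime_int_nonzero : (exists a, p a /\ a != 0) -> exists z : int, z != 0 /\ p z%:~R.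
Proof.
move=> [a [pa a0]]; have [_ [P [mP rP]]] := pOF pa.
have OFa := (pOF pa).
have P0 : P != 0 by apply: contraTneq mP => ->; rewrite monicE lead_coef0 eq_sym oner_eq0.
move: rP; rewrite /root; move: P P0 {mP}.
suff : forall n (P : {poly int}), (size P <= n)%N -> P != 0 ->
    (map_poly (fun z : int => z%:~R) P).[a] == 0 -> exists z : int, z != 0 /\ p z%:~R.
  by move=> h P P0 rP; apply: (h (size P) P (leqnn _) P0 rP).
elim=> [|n IH] P; first by rewrite leqn0 size_poly_eq0 => /eqP ->; rewrite eqxx.
move=> sP P0; rewrite ev_split.
case: (eqVneq (P`_0) 0) => [c0|c0] h.
  move: h; rewrite c0 add0r mulf_eq0 (negbTE a0) orbF => h.
  apply: (IH (drop_poly 1 P)) => //.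
    by rewrite size_drop_poly; lia.
  apply: contra P0 => /eqP d0; rewrite -(poly_take_drop 1 P) d0 mul0r addr0.
  by apply/eqP/polyP => i; rewrite coef_take_poly coef0; case: i => //= _; rewrite c0.
exists (P`_0); split=> //.
move: h; rewrite addr_eq0 => /eqP ->; rewrite -mulNr; apply: pM pa.
apply: subringN; first exact: OF_subring.
by apply: subring_ev=> //; exact: OF_subring.
Qed.


Hypothesis hpnz : exists a, p a /\ a != 0.

Lemma prime_char : exists l : nat,
  [/\ prime l, p l%:R & forall z : int, p z%:~R -> (l%:Z %| z)%Z].
Proof.
have [z [z0 pz]] := prime_int_nonzero hpnz.
have pabs : p (`|z|%N)%:R.
  have : p ((Posz `|z|%N)%:~R); last by [].
  rewrite abszE; case: (lerP 0 z) => hz; first by rewrite ger0_norm.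
  by rewrite ltr0_norm // rmorphN; apply: pN.
pose P n := (0 < n)%N /\ p n%:R.
have [n [[n0 pn] nmin]] : exists n, P n /\ forall m, P m -> (n <= m)%N.
  by apply: ex_minP; exists `|z|%N; split=> //; rewrite absz_gt0.
have OFnat m : OFF m%:R by apply: (subring_int (Posz m) OF_subring).
exists n; split=> //.
  apply/primeP; split.
    rewrite ltn_neqAle n0 andbT; apply/negP => /eqP n1; apply: p_not1.
    by rewrite -n1 in pn.
  move=> d /dvdnP [k hk]; have : p (k%:R * d%:R) by rewrite -natrM -hk.
  have k0 : (0 < k)%N by move: n0; rewrite hk muln_gt0 => /andP [].
  have d0 : (0 < d)%N by move: n0; rewrite hk muln_gt0 => /andP [].
  case/p_prime; rewrite ?OFnat // => h.
    have := nmin k (conj k0 h); rewrite /= hk => hle.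
    by apply/orP; left; apply/eqP; nia.
  have := nmin d (conj d0 h) => hle; apply/orP; right; apply/eqP.
  by move: hle; rewrite hk; nia.
move=> y py; apply/dvdz_mod0P.
set q := (y %/ n)%Z; set r := (y %% n)%Z.
have e : y = q * n + r by apply: divz_eq.
have pr : p r%:~R.
  have -> : r = y - q * n by rewrite e addrAC subrr add0r.
  rewrite rmorphB rmorphM /=; apply: pB => //; apply: pint.
  by have : p ((Posz n)%:~R); last by [].
have r0 : 0 <= r by apply: modz_ge0; rewrite eqz_nat -lt0n.
have rn : r < Posz n by apply: ltz_pmod; rewrite ltz_nat.
apply/eqP; apply: contraT => rnz.
have h : (n <= `|r|)%N.
  apply: (nmin `|r|%N); split; first by rewrite absz_gt0.
  by have : p ((Posz `|r|%N)%:~R); [rewrite abszE ger0_norm | ].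
move: rn; rewrite -(gez0_abs r0) ltz_nat; rewrite ltnNge h //.
Qed.

Lemma p_max a : OFF a -> ~ p a -> exists b, OFF b /\ p (a * b - 1).
Proof.
move=> OFa npa; have [l [pl pll ldiv]] := prime_char.
have [_ [P [mP rP]]] := OFa.
pose ev (Q : {poly int}) := (map_poly (fun z : int => z%:~R) Q).[a].
have OFev Q : OFF (ev Q) by apply: subring_ev=> //; exact: OF_subring.
have [P' [nc pP']] : exists P' : {poly int}, ~ p (P'`_0)%:~R /\ p (ev P').
  have : p (ev P) by move: rP; rewrite /root => /eqP; rewrite /ev => ->; exact: p0.
  move: P mP {rP}; suff : forall n (P : {poly int}), (size P <= n)%N -> P \is monic -> p (ev P) ->
     exists P' : {poly int}, ~ p (P'`_0)%:~R /\ p (ev P') by move=> h P mP; apply: (h (size P)).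
  elim=> [|n IH] P sP mP pP.
    by move: mP sP; rewrite leqn0 size_poly_eq0 => mP /eqP P0; move: mP; rewrite P0 monicE lead_coef0 eq_sym oner_eq0.
  case: (classic (p (P`_0)%:~R)) => hc; last by exists P.
  have s2 : (1 < size P)%N.
    rewrite ltnNge; apply/negP => s1; apply: p_not1.
    have : P`_0 = 1.
      move: (monicP mP); rewrite lead_coefE; case: (size P) s1 => [|[|]] //.
    by move=> h1; move: hc; rewrite h1 rmorph1.
  apply: (IH (drop_poly 1 P)).
  - by rewrite size_drop_poly; lia.
  - rewrite monicE lead_coefE size_drop_poly coef_drop_poly.
    have -> : ((size P - 1).-1 + 1 = (size P).-1)%N by lia.
    by rewrite -lead_coefE; apply: mP.
  - move: pP; rewrite /ev ev_split => h.
    have : p ((map_poly (fun z : int => z%:~R) (drop_poly 1 P)).[a] * a).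
      by have := pB h hc; rewrite addrC addKr.
    by rewrite mulrC => /p_prime [] //; apply: OFev.
have hc : ~~ (l%:Z %| P'`_0)%Z.
  apply/negP => /dvdzP [k hk]; apply: nc; rewrite hk rmorphM /=; apply: pint; exact: pll.
have cop : gcdz (P'`_0) l = 1.
  apply/eqP; rewrite -/(coprimez _ _) coprimezE /= coprime_sym prime_coprime //.
have [u [v huv]] := Bezoutz (P'`_0) l.
rewrite cop in huv.
set Q := drop_poly 1 P'.
exists (- (u%:~R * ev Q)); split.
  apply: subringN; first exact: OF_subring.
  apply: subringM; first exact: OF_subring.
    exact: (subring_int u OF_subring).
  exact: OFev.
have e1 : ((u * P'`_0 + v * l%:Z)%:~R : L) = 1 by rewrite huv.
rewrite rmorphD !rmorphM /= in e1.
have e2 : ev P' = (P'`_0)%:~R + ev Q * a by rewrite /ev ev_split.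
set C := (P'`_0)%:~R in e1 e2; set U := (u%:~R : L) in e1 *; set V := (v%:~R : L) in e1.
set E := ev Q in e2 *; set EP := ev P' in e2 pP'.
have -> : a * - (U * E) - 1 = (- u)%:~R * EP + (- v)%:~R * l%:R.
  rewrite e2 -{1}e1 !rmorphN /= -/U -/V; ring.
by apply: pD; apply: pint.
Qed.

End Prime.

Definition pb (P : Prop) : bool := if excluded_middle_informative P then true else false.
Lemma pbP (P : Prop) : reflect P (pb P).
Proof. by rewrite /pb; case: excluded_middle_informative => h; constructor. Qed.

Definition lOF (l : nat) : lset L := fun z => exists r, OFF r /\ z = l%:R * r.

Lemma lOF_ideal l : is_ideal OFF (lOF l).
Proof.
split.
  move=> x [r [hr ->]]; apply: subringM; first exact: OF_subring.
    exact: (subring_int (Posz l) OF_subring).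
  exact: hr.
split.
- by exists 0; split; [exact: subring0 OF_subring | rewrite mulr0].
- move=> x y [r [hr ->]] [s [hs ->]]; exists (r + s); split; last by rewrite mulrDr.
  exact: subringD OF_subring hr hs.
- move=> r x hr [s [hs ->]]; exists (r * s); split; last by rewrite mulrCA.
  exact: subringM OF_subring hr hs.
Qed.

Section Count.
Variable gO : seq L.
Hypothesis hgO : forall x, OFF x <-> zspI gO x.
Variable l : nat.
Hypothesis l0 : (0 < l)%N.
Local Notation n := (size gO).

Definition rep (c : {ffun 'I_n -> 'I_l}) : L := \sum_(i < n) (c i)%:R * gO`_i.
Definition mu (I : lset L) := #|[set c : {ffun 'I_n -> 'I_l} | pb (I (rep c))]|.

Lemma gO_OF i : (i < n)%N -> OFF gO`_i.
Proof. by move=> hi; apply/hgO; apply: zspI_mem; apply: mem_nth. Qed.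

Lemma rep_exists x : OFF x -> exists c, lOF l (x - rep c).
Proof.
move=> /hgO /zspI_zsp [c ->].
have hc (i : 'I_n) : (absz ((c i) %% l)%Z < l)%N.
  have h0 : 0 <= ((c i) %% l)%Z by apply: modz_ge0; rewrite eqz_nat -lt0n.
  by rewrite -ltz_nat gez0_abs //; apply: ltz_pmod; rewrite ltz_nat.
pose cc : {ffun 'I_n -> 'I_l} := [ffun i => Ordinal (hc i)].
exists cc; exists (\sum_(i < n) ((c i) %/ l)%Z%:~R * gO`_i); split.
  apply: zcl_sum; first exact: subring_zcl OF_subring.
  move=> i _; apply: subringM; first exact: OF_subring.
    exact: subring_int OF_subring.
  exact: gO_OF.
rewrite /rep -sumrB mulr_sumr; apply: eq_bigr => i _; rewrite ffunE /=.
have h0 : 0 <= ((c i) %% l)%Z by apply: modz_ge0; rewrite eqz_nat -lt0n.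
have -> : ((absz ((c i) %% l)%Z)%:R : L) = (((c i) %% l)%Z)%:~R.
  by rewrite -[in RHS](gez0_abs h0).
rewrite {1}(divz_eq (c i) l) rmorphD rmorphM /= mulrA [_ * l%:R]mulrC.
by rewrite mulrDl addrK.
Qed.

Lemma mu_le I : (mu I <= #|{ffun 'I_n -> 'I_l}|)%N.
Proof. exact: max_card. Qed.

Lemma mu_lt (I J : lset L) x : is_ideal OFF I -> is_ideal OFF J -> subS (lOF l) I -> subS I J ->
  J x -> ~ I x -> (mu I < mu J)%N.
Proof.
move=> hI hJ hlI hIJ Jx nIx; apply: proper_card; apply/properP; split.
  by apply/subsetP => c; rewrite !inE => /pbP /hIJ /pbP.
have [c hc] := rep_exists (hJ.1 x Jx).
case: hI => _ [_ hID hIM]; case: hJ => hJO [_ hJD hJM].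
have mN1 : OFF (-1) by apply: subringN OF_subring (subring1 OF_subring).
exists c; rewrite !inE; apply/pbP.
- have -> : rep c = x + (-1) * (x - rep c) by rewrite mulN1r opprB addrC subrK.
  by apply: hJD => //; apply: hJM => //; apply: hIJ; apply: hlI.
- move=> Ic; apply: nIx; have -> : x = (x - rep c) + rep c by rewrite subrK.
  by apply: hID => //; apply: hlI.
Qed.

End Count.


Lemma OF_ideal : is_ideal OFF OFF.
Proof.
split=> //; split; [exact: subring0 OF_subring | move=> ??; exact: subringD OF_subring
  | move=> ??; exact: subringM OF_subring].
Qed.

Fixpoint allP (P : lset L -> Prop) (ps : seq (lset L)) : Prop :=
  if ps is q :: ps' then P q /\ allP P ps' else True.

Definition prodS (ps : seq (lset L)) := foldr (@mulS L) OFF ps.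

Lemma allP_cat P ps1 ps2 : allP P (ps1 ++ ps2) <-> allP P ps1 /\ allP P ps2.
Proof. by elim: ps1 => [|q ps1 IH] /=; [tauto | rewrite IH; tauto]. Qed.

Lemma prodS_ideal ps : allP (is_ideal OFF) ps -> is_ideal OFF (prodS ps).
Proof.
elim: ps => [|q ps IH] /=; first by move=> _; exact: OF_ideal.
by move=> [hq hps]; apply: ideal_mulS; [exact: OF_subring | | apply: IH].
Qed.

Lemma prodS_cat ps1 ps2 : subS (prodS (ps1 ++ ps2)) (mulS (prodS ps1) (prodS ps2)).
Proof.
elim: ps1 => [|q ps1 IH] /=.
  by move=> x hx; rewrite -[x]mul1r; apply: mulS_in => //; exact: subring1 OF_subring.
move=> x hx; apply: mulS_subA; move: x hx; apply: mulS_mono => //.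
Qed.

Definition addI (I : lset L) (x : L) : lset L :=
  fun z => exists i r, I i /\ OFF r /\ z = i + x * r.

Lemma addI_ideal I x : is_ideal OFF I -> OFF x -> is_ideal OFF (addI I x).
Proof.
move=> [hIO [hI0 hID hIM]] hx; have hO := OF_subring.
split.
  move=> z [i [r [hi [hr ->]]]]; apply: subringD hO (hIO _ hi) (subringM hO hx hr).
split.
- by exists 0, 0; split=> //; split; [exact: subring0 hO | rewrite mulr0 addr0].
- move=> z w [i [r [hi [hr ->]]]] [j [s [hj [hs ->]]]]; exists (i + j), (r + s).
  split; first exact: hID.
  by split; [exact: subringD hO hr hs | rewrite mulrDr addrACA].
- move=> t z ht [i [r [hi [hr ->]]]]; exists (t * i), (t * r); split; first exact: hIM.
  by split; [exact: subringM hO ht hr | rewrite mulrDr mulrCA].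
Qed.

Section Products.
Variable gO : seq L.
Hypothesis hgO : forall x, OFF x <-> zspI gO x.
Variable l : nat.
Hypothesis l0 : (0 < l)%N.

Definition good (q : lset L) := is_prime OFF q /\ subS (lOF l) q.

Lemma prod_primes I : is_ideal OFF I -> subS (lOF l) I ->
  exists ps, allP good ps /\ subS (prodS ps) I.
Proof.
set B := #|{ffun 'I_(size gO) -> 'I_l}|.
have hO := OF_subring.
suff H : forall k I, (B - mu gO l I < k)%N -> is_ideal OFF I -> subS (lOF l) I ->
    exists ps, allP good ps /\ subS (prodS ps) I.
  by move=> hI hlI; apply: (H (B - mu gO l I).+1).
elim=> [|k IH] {}I hk hI hlI; first by [].
case: (classic (I 1)) => [I1|nI1].
  exists [::]; split=> // x hx /=; rewrite -[x]mulr1; case: hI => _ [_ _ hM]; exact: hM.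
case: (classic (is_prime OFF I)) => [pI|npI].
  exists [:: I]; split=> //=; apply: mulS_sub_l; first exact: hI.2.
  by move=> x [].
have [x [y [hx [hy [hxy [nx ny]]]]]] : exists x y, OFF x /\ OFF y /\ I (x * y) /\ ~ I x /\ ~ I y.
  apply: NNPP => hn; apply: npI; split=> // a b ha hb hab.
  apply: NNPP => hn2; apply: hn; exists a, b; do 3!split=> //; tauto.
have sub1 z : I z -> addI I z = addI I z by [].
have hIx : subS I (addI I x).
  by move=> z hz; exists z, 0; split=> //; split; [exact: subring0 hO | rewrite mulr0 addr0].
have hIy : subS I (addI I y).
  by move=> z hz; exists z, 0; split=> //; split; [exact: subring0 hO | rewrite mulr0 addr0].
have xI : addI I x x.
  by exists 0, 1; split; [case: hI => _ [] | split; [exact: subring1 hO | rewrite mulr1 add0r]].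
have yI : addI I y y.
  by exists 0, 1; split; [case: hI => _ [] | split; [exact: subring1 hO | rewrite mulr1 add0r]].
have Ix := addI_ideal hI hx; have Iy := addI_ideal hI hy.
have lt1 := mu_lt hgO l0 hI Ix hlI hIx xI nx.
have lt2 := mu_lt hgO l0 hI Iy hlI hIy yI ny.
have le1 := mu_le gO l (addI I x); have le2 := mu_le gO l (addI I y).
have [ps1 [g1 s1]] : exists ps, allP good ps /\ subS (prodS ps) (addI I x).
  apply: IH => //; first by rewrite -/B in le1 *; lia.
  by move=> z /hlI /hIx.
have [ps2 [g2 s2]] : exists ps, allP good ps /\ subS (prodS ps) (addI I y).
  apply: IH => //; first by rewrite -/B in le2 *; lia.
  by move=> z /hlI /hIy.
exists (ps1 ++ ps2); split; first by apply/allP_cat.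
move=> z /prodS_cat /(mulS_mono s1 s2); move: z.
case: hI => hIO [hI0 hID hIM].
apply: mulS_min; first by split.
move=> u w [i [r [hi [hr ->]]]] [j [s [hj [hs ->]]]].
have -> : (i + x * r) * (j + y * s) = (j + y * s) * i + (r * x) * j + (r * s) * (x * y).
  by ring.
apply: (hID); first apply: (hID).
- by apply: hIM => //; apply: subringD hO (hIO _ hj) (subringM hO hy hs).
- by apply: hIM => //; apply: subringM hO hr hx.
- by apply: hIM => //; apply: subringM hO hr hs.
Qed.

End Products.


Lemma allP_impl (P Q : lset L -> Prop) ps : (forall q, P q -> Q q) -> allP P ps -> allP Q ps.
Proof. by move=> hPQ; elim: ps => [|q ps IH] //= [hq hps]; split; [apply: hPQ | apply: IH]. Qed.

Lemma prodS_elem ps1 q ps2 b y : prodS (ps1 ++ ps2) b -> q y ->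
  prodS (ps1 ++ q :: ps2) (b * y).
Proof.
move=> hb hy; elim: ps1 b hb => [|r ps1 IH] b /= hb.
  by rewrite mulrC; apply: mulS_in.
move: b hb; apply: (@mulS_min _ r (prodS (ps1 ++ ps2)) (fun b => mulS r (prodS (ps1 ++ q :: ps2)) (b * y))).
  split; first by rewrite mul0r; apply: (mulS_addcl _ _).1.
  by move=> u v hu hv; rewrite mulrDl; apply: (mulS_addcl _ _).2.
by move=> u w hu hw; rewrite -mulrA; apply: mulS_in => //; apply: IH.
Qed.

Section Inv.
Variable p : lset L.
Hypothesis hp : is_prime OFF p.
Hypothesis hpnz : exists a, p a /\ a != 0.
Variable gO : seq L.
Hypothesis hgO : forall x, OFF x <-> zspI gO x.
Hypothesis hfg : forall M, zcl M -> subS M OFF -> exists g, forall x, M x <-> zspI g x.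

Lemma prime_avoid ps : allP (is_ideal OFF) ps -> subS (prodS ps) p ->
  exists ps1 q ps2, ps = ps1 ++ q :: ps2 /\ subS q p.
Proof.
elim: ps => [|q ps IH] /=.
  by move=> _ h; exfalso; apply: (p_not1 hp); apply: h; exact: subring1 OF_subring.
move=> [hq hps] hsub.
case: (classic (subS q p)) => [qp|nqp]; first by exists [::], q, ps.
have [a [qa npa]] : exists a, q a /\ ~ p a.
  by apply: NNPP => h; apply: nqp => z qz; apply: NNPP => nz; apply: h; exists z.
have [ps1 [r [ps2 [-> rp]]]] : exists ps1 r ps2, ps = ps1 ++ r :: ps2 /\ subS r p.
  apply: IH => // z hz.
  have : p (a * z) by apply: hsub; apply: mulS_in.
  case/(p_prime hp); [exact: hq.1 | exact: (prodS_ideal hps).1 | done | done].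
by exists (q :: ps1), r, ps2.
Qed.

Lemma neuk : exists x, x \in F /\ ~ OFF x /\ forall y, p y -> OFF (x * y).
Proof.
have [l [pl pll ldiv]] := prime_char hp hpnz.
have l0 : (0 < l)%N by apply: prime_gt0.
have lp : subS (lOF l) p by move=> z [r [hr ->]]; rewrite mulrC; apply: (pM hp).
pose P m := exists ps, size ps = m /\ allP (good l) ps /\ subS (prodS ps) (lOF l).
have [m [[ps [sz [gps sps]]] mmin]] : exists m, P m /\ forall k, P k -> (m <= k)%N.
  apply: ex_minP; have [ps [g1 s1]] := prod_primes hgO l0 (lOF_ideal l) (fun _ h => h).
  by exists (size ps), ps.
have ips : allP (is_ideal OFF) ps by apply: allP_impl gps => q [[]].
have [ps1 [q [ps2 [eps qp]]]] := prime_avoid ips (fun z hz => lp z (sps z hz)).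
have [gq gr] : good l q /\ allP (good l) (ps1 ++ ps2).
  move: gps; rewrite eps => /allP_cat [g1 /= [g2 g3]]; split=> //; exact/allP_cat.
have pq : subS p q.
  move=> z pz; apply: NNPP => nqz.
  have qnz : exists a, q a /\ a != 0.
    exists (l%:R * 1); split; first by apply: gq.2; exists 1; split=> //; exact: subring1 OF_subring.
    by rewrite mulr1 natrL_eq0 -lt0n.
  have [b [hb qb]] := p_max gq.1 qnz (pOF hp pz) nqz.
  apply: (p_not1 hp); have -> : (1 : L) = z * b - (z * b - 1) by rewrite subKr.
  by apply: (pB hp); [rewrite mulrC; apply: (pM hp) | apply: qp].
have [b [hb nlb]] : exists b, prodS (ps1 ++ ps2) b /\ ~ lOF l b.
  apply: NNPP => h.
  have : (m <= size (ps1 ++ ps2))%N.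
    apply: mmin; exists (ps1 ++ ps2); split=> //; split=> // z hz.
    by apply: NNPP => nz; apply: h; exists z.
  by rewrite -sz eps !size_cat /=; lia.
have OFb : OFF b.
  have : allP (is_ideal OFF) (ps1 ++ ps2) by apply: allP_impl gr => q' [[]].
  by move=> /prodS_ideal [h _]; apply: h.
have ln0 : (l%:R : L) != 0 by rewrite natrL_eq0 -lt0n.
exists (b / l%:R); split; [|split].
- by rewrite rpredM ?rpredV ?rpred_nat //; exact: OFb.1.
- move=> hx; apply: nlb; exists (b / l%:R); split=> //.
  by rewrite mulrC mulrVK ?unitfE.
- move=> y py; have : lOF l (b * y).
    by apply: sps; rewrite eps; apply: prodS_elem => //; apply: pq.
  move=> [r [hr e]]; rewrite mulrAC e mulrC mulrA mulVf ?mul1r //.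
Qed.

Lemma invS_module : is_module OFF (invS F OFF p).
Proof.
have hO := OF_subring.
split.
- by split; [exact: rpred0 | move=> y _; rewrite mul0r; exact: subring0 hO].
- move=> u v [hu hu'] [hv hv']; split; first by rewrite rpredD.
  by move=> y hy; rewrite mulrDl; apply: subringD hO (hu' _ hy) (hv' _ hy).
- move=> r u hr [hu hu']; split; first by rewrite rpredM //; exact: hr.1.
  by move=> y hy; rewrite -mulrA; apply: subringM hO hr (hu' _ hy).
Qed.

Lemma p_inv : seteq (mulS p (invS F OFF p)) OFF.
Proof.
have hO := OF_subring.
set pi := invS F OFF p.
have ppO : subS (mulS p pi) OFF.
  apply: mulS_min; first exact: subring_addcl hO.
  by move=> a u pa [_ hu]; rewrite mulrC; apply: hu.
have ppM := mulS_module p hO invS_module.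
have pi1 : pi 1 by split; [exact: mem1v | move=> y /(pOF hp); rewrite mul1r].
apply: sub_seteq => //.
case: (classic (subS (mulS p pi) p)) => [hsub|nsub].
  exfalso; have [x [xF [nx hx]]] := neuk.
  have xpi : pi x by split.
  have xpp y : p y -> p (x * y) by move=> py; rewrite mulrC; apply: hsub; apply: mulS_in.
  have [gp hgp] := hfg (p_zcl hp) (pOF hp).
  apply: nx; split=> //; apply: (DT (g := gp)).
    apply: NNPP => h; have [a [pa a0]] := hpnz; move: a0.
    have : zspI gp a by apply/hgp.
    move=> /(_ (fun y => y = 0)) -> //; first by rewrite eqxx.
      split=> //; [by move=> ?? -> ->; rewrite addr0 | by move=> ? ->; rewrite oppr0].
    move=> y hy; apply: NNPP => y0; apply: h; exists (index y gp); rewrite index_mem nth_index //.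
    by split=> //; apply/eqP.
  move=> i hi; apply: zspI_zsp; apply/hgp; apply: xpp; apply/hgp.
  by apply: zspI_mem; apply: mem_nth.
have [z [ppz nz]] : exists z, mulS p pi z /\ ~ p z.
  by apply: NNPP => h; apply: nsub => z hz; apply: NNPP => nz; apply: h; exists z.
have [b [hb pb1]] := p_max hp hpnz (ppO _ ppz) nz.
have pp1 : mulS p pi 1.
  have -> : (1 : L) = b * z + (-1) * (z * b - 1) by rewrite mulN1r opprB mulrC addrC subrK.
  case: ppM => _ hD hM; apply: hD; first by apply: hM.
  apply: hM; first by apply: subringN hO (subring1 hO).
  by rewrite -[_ - 1]mulr1; apply: mulS_in.
move=> r hr; rewrite -[r]mulr1; case: ppM => _ _ hM; exact: hM.
Qed.

End Inv.


Lemma mulS_ACA (A B C D : lset L) :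
  seteq (mulS (mulS A B) (mulS C D)) (mulS (mulS A C) (mulS B D)).
Proof.
apply: seteq_trans (seteq_sym (mulSA _ _ _)) _.
apply: seteq_trans (mulS_congr (seteq_refl _) (mulSA _ _ _)) _.
apply: seteq_trans (mulS_congr (seteq_refl _) (mulS_congr (mulSC _ _) (seteq_refl _))) _.
apply: seteq_trans (mulS_congr (seteq_refl _) (seteq_sym (mulSA _ _ _))) _.
exact: mulSA.
Qed.

Section Arith.
Variable p : lset L.
Hypothesis hpI : is_ideal OFF p.
Local Notation pinv := (invS F OFF p).
Hypothesis hinv : seteq (mulS p pinv) OFF.
Local Notation P := (powS OFF p).
Local Notation Q := (powS OFF pinv).

Lemma OFOF : seteq (mulS OFF OFF) OFF.
Proof. exact: mulS_modO OF_subring OF_ideal.2. Qed.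

Lemma P_ideal n : is_ideal OFF (P n).
Proof. exact: powS_ideal OF_subring hpI. Qed.

Lemma PQ n : seteq (mulS (P n) (Q n)) OFF.
Proof.
elim: n => [|n IH] /=; first exact: OFOF.
apply: seteq_trans (mulS_ACA _ _ _ _) _.
apply: seteq_trans (mulS_congr hinv IH) _; exact: OFOF.
Qed.

Lemma Padd a b : seteq (P (a + b)) (mulS (P a) (P b)).
Proof.
elim: a => [|a IH] /=.
  by rewrite add0n; apply: seteq_sym; apply: mulS_Omod OF_subring (P_ideal b).2.
apply: seteq_trans (mulS_congr (seteq_refl _) IH) _; exact: mulSA.
Qed.

Lemma P_mono a b : (a <= b)%N -> subS (P b) (P a).
Proof.
move=> hab x; rewrite -(subnKC hab) => /(seteq_sub (Padd _ _)) h.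
exact: (mulS_sub_l (P_ideal a).2 (P_ideal _).1 h).
Qed.

Lemma Qcancel n X : is_ideal OFF X -> seteq (mulS (Q n) (mulS (P n) X)) X.
Proof.
move=> hX; apply: seteq_trans (mulSA _ _ _) _.
apply: seteq_trans (mulS_congr (mulSC _ _) (seteq_refl _)) _.
apply: seteq_trans (mulS_congr (PQ n) (seteq_refl _)) _.
exact: mulS_Omod OF_subring hX.2.
Qed.

Lemma sub_div j I : is_ideal OFF I -> subS I (P j) ->
  exists C, is_ideal OFF C /\ seteq I (mulS (P j) C).
Proof.
move=> hI hIP; exists (mulS (Q j) I); split.
  split; last exact: mulS_module OF_subring hI.2.
  move=> x hx; apply: (seteq_sub (PQ j)); apply: mulS_subC.
  by move: x hx; apply: mulS_mono.
apply: seteq_sym; apply: seteq_trans (mulSA _ _ _) _.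
apply: seteq_trans (mulS_congr (PQ j) (seteq_refl _)) _.
exact: mulS_Omod OF_subring hI.2.
Qed.

Hypothesis hp : is_prime OFF p.

Lemma P1p : subS (P 1) p.
Proof. exact: mulS_sub_l hpI.2 (fun x h => h). Qed.

Lemma L7 f' : is_ideal OFF f' -> ~ subS f' p -> forall t C, is_ideal OFF C ->
  subS (mulS f' C) (P t) -> subS C (P t).
Proof.
move=> hf nf; elim=> [|t IH] C hC hsub; first by apply: hC.1.
have [a [fa npa]] : exists a, f' a /\ ~ p a.
  by apply: NNPP => h; apply: nf => z fz; apply: NNPP => nz; apply: h; exists z.
have Cp : subS C p.
  move=> c Cc; have : p (a * c).
    by apply: P1p; apply: (P_mono (isT : (1 <= t.+1)%N)); apply: hsub; apply: mulS_in.
  by case/(p_prime hp); [exact: hf.1 | exact: hC.1 | by move/npa | by []].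
have CP1 : subS C (P 1).
  by move=> c hc; rewrite -[c]mulr1; apply: mulS_in; [apply: Cp | exact: subring1 OF_subring].
have [C'' [hC'' eC]] := sub_div hC CP1.
have sC'' : subS (mulS f' C'') (P t).
  have h1 : subS (mulS (P 1) (mulS f' C'')) (mulS (P 1) (P t)).
    move=> x /mulS_subA /(mulS_mono (@mulS_subC _ _ _) (fun _ h => h)).
    move=> /(seteq_sub (seteq_sym (mulSA _ _ _))) h.
    apply: (seteq_sub (Padd 1 t)); apply: hsub.
    by move: h; apply: mulS_mono => // y hy; apply: (seteq_sub (seteq_sym eC)).
  move=> x /(seteq_sub (seteq_sym (Qcancel 1 (ideal_mulS OF_subring hf hC'')))) h.
  apply: (seteq_sub (Qcancel 1 (P_ideal t))); move: h; apply: mulS_mono => //.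
move=> c /(seteq_sub eC) h; apply: (seteq_sub (seteq_sym (Padd 1 t))).
by move: h; apply: mulS_mono => //; exact: IH hC'' sC''.
Qed.

Lemma dir2 (f C v : lset L) k e : is_ideal OFF f -> is_ideal OFF C ->
  seteq v (mulS f C) -> subS v (P e) -> ~ divI OFF (P k) f -> (k <= e)%N ->
  subS (mulS (Q (e - k).+1) v) f.
Proof.
move=> hf hC ev ve ndiv hke.
have nfk : ~ subS f (P k) by move=> h; apply: ndiv; apply: sub_div.
have [m [nm mmin]] : exists m, ~ subS f (P m) /\ forall m', ~ subS f (P m') -> (m <= m')%N.
  by apply: ex_minP; exists k.
have mk : (m <= k)%N by apply: mmin.
have m0 : (0 < m)%N by rewrite lt0n; apply/eqP => m0; apply: nm; rewrite m0; exact: hf.1.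
set j := m.-1.
have ejm : m = j.+1 by rewrite /j prednK.
have fj : subS f (P j).
  apply: NNPP => h; have := mmin j h; rewrite ejm ltnn //.
have [f' [hf' ef]] := sub_div hf fj.
have nf' : ~ subS f' p.
  move=> h; apply: nm; rewrite ejm => x /(seteq_sub ef) hx /=.
  by apply: mulS_subC; move: hx; apply: mulS_mono.
have hf'C := ideal_mulS OF_subring hf' hC.
have sub1 : subS (mulS f' C) (P (e - j)).
  move=> x /(seteq_sub (seteq_sym (Qcancel j hf'C))) hx.
  apply: (seteq_sub (Qcancel j (P_ideal (e - j)))); move: hx; apply: mulS_mono => // y.
  move=> /mulS_subA hy; apply: (seteq_sub (Padd j (e - j))).
  have -> : (j + (e - j) = e)%N by lia.
  apply: ve; apply: (seteq_sub (seteq_sym ev)); move: hy; apply: mulS_mono => //.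
  by move=> z hz; apply: (seteq_sub (seteq_sym ef)).
have CP : subS C (P (e - k).+1).
  move=> c hc; apply: (P_mono (_ : ((e - k).+1 <= e - j)%N)); first by lia.
  exact: L7 hf' nf' _ _ hC sub1 _ hc.
move=> x /(mulS_mono (fun _ h => h) (seteq_sub ev)) /mulS_subA.
move=> /(mulS_mono (@mulS_subC _ _ _) (fun _ h => h)) /(seteq_sub (seteq_sym (mulSA _ _ _))).
have hs : subS (mulS (Q (e - k).+1) C) OFF.
  move=> y /(mulS_mono (fun _ h => h) CP) /mulS_subC /(seteq_sub (PQ _)) //.
exact: (mulS_sub_l hf.2 hs).
Qed.

End Arith.


Lemma subring_module (O : lset L) : is_subring O -> is_module O O.
Proof. by move=> hO; split; [exact: subring0 | move=> ??; exact: subringD | move=> ??; exact: subringM]. Qed.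

Lemma OO (O : lset L) : is_subring O -> seteq (mulS O O) O.
Proof. by move=> hO; apply: mulS_modO hO (subring_module hO). Qed.

Section Rel.
Variables O1 O2 : lset L.
Hypothesis h12 : subS O1 O2.
Hypothesis h1 : O1 1.
Hypothesis hO2 : is_subring O2.

Lemma O1O2 : seteq (mulS O1 O2) O2.
Proof.
apply: sub_seteq.
  apply: mulS_min; first exact: subring_addcl hO2.
  by move=> a b ha hb; apply: subringM hO2 (h12 ha) hb.
by move=> y hy; rewrite -[y]mul1r; apply: mulS_in.
Qed.

Lemma distrO2 (X Y : lset L) : seteq (mulS (mulS X Y) O2) (mulS (mulS X O2) (mulS Y O2)).
Proof.
apply: seteq_trans (mulS_congr (seteq_refl _) (seteq_sym (OO hO2))) _.
exact: mulS_ACA.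
Qed.

Lemma aO12 (a : lset L) : seteq (mulS (mulS a O1) O2) (mulS a O2).
Proof.
apply: seteq_trans (seteq_sym (mulSA _ _ _)) _.
exact: mulS_congr (seteq_refl _) O1O2.
Qed.

Definition Tprod (O : lset L) (R : seq (lset L)) :=
  foldr (@mulS L) O [seq mulS a O | a <- R].

Lemma Tprod_up R : seteq (mulS (Tprod O1 R) O2) (Tprod O2 R).
Proof.
elim: R => [|a R IH] /=; first exact: O1O2.
apply: seteq_trans (distrO2 _ _) _.
exact: mulS_congr (aO12 a) IH.
Qed.

Lemma rel_up R : rel_holds O1 R -> rel_holds O2 R.
Proof.
move=> [x [x0 hx]]; exists x; split=> //.
apply: seteq_trans (seteq_sym (Tprod_up R)) _.
apply: seteq_trans (mulS_congr hx (seteq_refl _)) _.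
apply: sub_seteq.
  apply: mulS_min.
    split; first by exists 0; split; [exact: subring0 hO2 | rewrite mulr0].
    move=> u w [z [hz ->]] [z' [hz' ->]]; exists (z + z'); split; last by rewrite mulrDr.
    exact: subringD hO2 hz hz'.
  move=> u w [z [hz ->]] hw; exists (z * w); split; last by rewrite mulrA.
  exact: subringM hO2 (h12 hz) hw.
move=> y [z [hz ->]]; have -> : x * z = (x * 1) * z by rewrite mulr1.
by apply: mulS_in => //; exists 1; split; [exact: h1 | ].
Qed.

End Rel.

Lemma OK_module : is_module (@OKset L) (@OKset L).
Proof. exact: subring_module OK_subring. Qed.

Lemma OF_OK x : OFF x -> (@OKset L) x. Proof. by case. Qed.

Lemma fOK_sub f : is_ideal OFF f -> subS (mulS f (@OKset L)) (@OKset L).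
Proof.
move=> hf; apply: mulS_min; first exact: subring_addcl OK_subring.
by move=> a b ha hb; apply: subringM OK_subring (OF_OK (hf.1 _ ha)) hb.
Qed.

Lemma Ord_subring f : is_ideal OFF f -> is_subring (Ord F f).
Proof.
move=> hf; have hO := OF_subring.
have hM := mulS_module f OK_subring OK_module.
case: (hM) => hM0 hMD hMM.
have mN1 : (@OKset L) (-1 : L) by apply: subringN OK_subring (subring1 OK_subring).
split.
- by exists 1, 0; split; [exact: subring1 hO | split=> //; rewrite addr0].
- move=> x y [a [b [ha [hb ->]]]] [a' [b' [ha' [hb' ->]]]].
  exists (a - a'), (b + (-1) * b'); split; first by case: hO => _ hB _; apply: hB.
  split; first by apply: hMD => //; apply: hMM.
  by rewrite mulN1r opprD addrACA.
- move=> x y [a [b [ha [hb ->]]]] [a' [b' [ha' [hb' ->]]]].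
  exists (a * a'), (a * b' + b * a' + b' * b); split; first exact: subringM hO ha ha'.
  split; last by ring.
  apply: (hMD); first apply: (hMD).
  + by apply: hMM => //; exact: OF_OK.
  + by rewrite mulrC; apply: hMM => //; exact: OF_OK.
  + by apply: hMM => //; apply: (fOK_sub hf).
Qed.

Lemma Ord1 f : Ord F f 1.
Proof.
exists 1, 0; split; first exact: subring1 OF_subring.
by split; [exact: (mulS_addcl _ _).1 | rewrite addr0].
Qed.

Lemma Ord_mono f g : subS (mulS f (@OKset L)) (mulS g (@OKset L)) -> subS (Ord F f) (Ord F g).
Proof. by move=> h x [a [b [ha [hb ->]]]]; exists a, b; split=> //; split=> //; apply: h. Qed.

End OFsec.

Unset Implicit Arguments.
Set Strict Implicit.

Theorem mainTheorem3 (L : fieldExtType rat) (F : {subfield L}) (pi : L)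
  (hCM : CM_with_max_real F)
  (hgen : <<1%VS; pi>>%VS = fullv)
  (hord : is_order (OFpi F pi))
  (v : lset L) (hv : is_ideal (OF F) v)
  (hvf : divI (OF F) v (condplus F (OFpi F pi)))
  (p : lset L) (hp : is_prime (OF F) p) (k : nat) (hk : (1 <= k)%N)
  (hpk : divI (OF F) (powS (OF F) p k) v)
  (e : nat) (he : pval (OF F) p v e)
  (R : seq (lset L)) (hR : forall i, (i < size R)%N -> inv_ideal (OFpi F pi) (nth (fun _ => False) R i))
  (h1 : rel_holds (Ord F (mulS (powZ F (OF F) p (k%:Z - 1 - e%:Z)) v)) R)
  (h2 : ~ rel_holds (Ord F (powS (OF F) p k)) R) :
  forall f : lset L, is_ideal (OF F) f -> divI (OF F) f v ->
    (divI (OF F) (powS (OF F) p k) f <-> ~ rel_holds (Ord F f) R).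
Proof.
move=> f hf hfv.
have hO := OF_subring F.
have hfg : forall M, zcl M -> subS M (OF F) -> exists g, forall x, M x <-> zspI g x.
  case: hord => _ [s [hs _]].
  move=> M hM hMO; apply: (FG (s := s)) => // x /hMO hx.
  have : OFpi F pi x.
    exists [:: x]; split; first by move=> c; rewrite inE => /eqP ->.
    by rewrite big_ord1 /= expr0 mulr1.
  by move=> /hs [c [_ ->]]; exists (fun i => c`_i).
have [gO hgO] := hfg _ (subring_zcl hO) (fun x h => h).
have hpI : is_ideal (OF F) p by case: hp.
have PI n := powS_ideal n hO hpI.
have hpnz : exists a, p a /\ a != 0.
  apply: NNPP => hn.
  have p0 a : p a -> a = 0.
    by move=> pa; apply: NNPP => a0; apply: hn; exists a; split=> //; apply/eqP.
  have z0 : addcl (fun y : L => y = 0) by split=> // ?? -> ->; rewrite addr0.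
  have Pz n : subS (powS (OF F) p n.+1) (fun y => y = 0).
    by apply: mulS_min => // a b /p0 -> _; rewrite mul0r.
  apply: he.2; exists (OF F); split; first exact: OF_ideal.
  move=> x; split.
    move=> vx; have := divI_sub hO (PI k).2 hpk vx.
    case: k hk {hpk h1 h2} => // k' _ /Pz ->; exact: (mulS_addcl _ _).1.
  move=> hx.
  have hm : subS (mulS (powS (OF F) p e.+1) (OF F)) (fun y : L => y = 0).
    by apply: mulS_min => // a b /Pz -> _; rewrite mul0r.
  by rewrite (hm x hx); case: hv => _ [].
have hinv := p_inv hp hpnz hgO hfg.
have ve : subS v (powS (OF F) p e) := divI_sub hO (PI e).2 he.1.
have ek : (k <= e)%N.
  rewrite leqNgt; apply/negP => ke; apply: he.2.
  apply: (sub_div hinv hv) => x /(divI_sub hO (PI k).2 hpk).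
  by apply: (P_mono hpI ke).
split.
  move=> [E [hE eE]] hrel; apply: h2.
  apply: (rel_up _ (Ord1 _ _)) hrel; last exact: Ord_subring (PI k).
  apply: Ord_mono => x /(mulS_mono (seteq_sub eE) (fun _ h => h)).
  move=> /(seteq_sub (seteq_sym (mulSA _ _ _))).
  by apply: mulS_mono => // y hy; exact: (fOK_sub hE hy).
move=> nrel; apply: NNPP => ndiv; apply: nrel.
have [C [hC eC]] := hfv.
have ee : (k%:Z - 1 - e%:Z) = Negz (e - k) by rewrite NegzE; lia.
rewrite ee /= in h1.
have sub := dir2 hpI hinv hp hf hC eC ve ndiv ek.
apply: (rel_up _ (Ord1 _ _)) h1; last exact: Ord_subring hf.
by apply: Ord_mono; apply: mulS_mono.
Qed.
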